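(* Assume $\tau_1+\tau_2=1$, parametrize $\tau_2=\frac12(1+\nu_1-\nu_2)$, $\tau_3=\nu_1\nu_2+\frac{(\alpha+\beta)(\nu_1+\nu_2-1)}{2}$, and assume $\alpha+\nu_1+\nu_2\notin\mathbb Z$. Set $\widetilde\alpha=-\alpha-\beta-\nu_1-\nu_2$, $\widetilde\beta=\beta$ and, for $n\ge0$, $\psi_n(x)=x^{\nu_2-1}\widehat P_n^{(\widetilde\alpha,\widetilde\beta)}(1/x)$ on $x\in(0,1)$. Then (i) $M\psi_n=\widetilde\lambda_n\psi_n$ with $\widetilde\lambda_n=n(n-1)+(2-\nu_1-\nu_2-\alpha)n+\tau_0+\nu_1\nu_2+\tfrac12(\alpha-1)(\nu_1+\nu_2-1)$; (ii) $L$ acts tridiagonally on $\{\psi_n\}$: for every $n\ge0$ there are constants $\xi_n,\eta_n,\zeta_n$ with $L\psi_n=\xi_n\psi_{n+1}+\eta_n\psi_n+\zeta_n\psi_{n-1}$ (where $\psi_{-1}:=0$).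
   Context: $L=x(1-x)\partial_x^2+\big(\alpha+1-(\alpha+\beta+2)x\big)\partial_x$ with real $\alpha,\beta$, $X$ is multiplication by $x$, and $M=\tau_1XL+\tau_2LX+\tau_3X+\tau_0$ with real $\tau_i$. For parameters $a,b$ with $a+b\notin\mathbb Z$, the monic Jacobi polynomial is $\widehat P_n^{(a,b)}(t)=\frac{(-1)^n(a+1)_n}{(n+a+b+1)_n}{}_2F_1(-n,n+a+b+1;a+1;t)$, where $(c)_n=c(c+1)\cdots(c+n-1)$; it is the monic degree-$n$ eigenpolynomial of $t(1-t)\partial_t^2+(a+1-(a+b+2)t)\partial_t$ with eigenvalue $-n(n+a+b+1)$. *)

(* Defs.v *)
From Stdlib Require Import Reals Lra Lia ZArith.
Open Scope R_scope.

Fixpoint poch (c : R) (n : nat) : R :=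
  match n with
  | O => 1
  | S m => poch c m * (c + INR m)
  end.

(* Coefficient of t^k in the monic Jacobi polynomial hat P_n^(a,b)(t):
   (-1)^n (a+1)_n/(n+a+b+1)_n * (-n)_k (n+a+b+1)_k / ((a+1)_k k!),
   written with (a+1)_n/(a+1)_k = (a+1+k)_(n-k). *)
Definition jacobi_coef (n : nat) (a b : R) (k : nat) : R :=
  (-1) ^ n * poch (a + 1 + INR k) (n - k) * poch (- INR n) k
  * poch (INR n + a + b + 1) k / (poch (INR n + a + b + 1) n * INR (fact k)).

Definition monic_jacobi (n : nat) (a b t : R) : R :=
  sum_f_R0 (fun k => jacobi_coef n a b k * t ^ k) n.

(* Lrel al be f g : on (0,1), f is twice differentiable and
   g = L f, where L = x(1-x) d^2/dx^2 + (al+1-(al+be+2)x) d/dx. *)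
Definition Lrel (al be : R) (f g : R -> R) : Prop :=
  exists f1 f2 : R -> R,
    forall x, 0 < x < 1 ->
      derivable_pt_lim f x (f1 x) /\
      derivable_pt_lim f1 x (f2 x) /\
      g x = x * (1 - x) * f2 x + (al + 1 - (al + be + 2) * x) * f1 x.

Definition psi (al be nu1 nu2 : R) (n : nat) (x : R) : R :=
  Rpower x (nu2 - 1) * monic_jacobi n (- al - be - nu1 - nu2) be (/ x).

(* Main.v *)
Require Import Defs.
From Stdlib Require Import Reals Lra Lia Field ZArith.
Open Scope R_scope.

Lemma poch_S c m : poch c (S m) = poch c m * (c + INR m).
Proof. reflexivity. Qed.

Lemma poch_Sl c m : poch c (S m) = c * poch (c+1) m.
Proof.
  revert c; induction m as [|m IH]; intro c.
  - simpl. ring.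
  - rewrite poch_S, IH, poch_S, S_INR. ring.
Qed.

Lemma poch_add c p q : poch c (p+q) = poch c p * poch (c + INR p) q.
Proof.
  induction q as [|q IH].
  - rewrite Nat.add_0_r. simpl. ring.
  - rewrite Nat.add_succ_r, !poch_S, IH, plus_INR. ring.
Qed.

Lemma poch_nz c m : (forall i, (i < m)%nat -> c + INR i <> 0) -> poch c m <> 0.
Proof.
  induction m as [|m IH]; intro H.
  - simpl. lra.
  - rewrite poch_S. apply Rmult_integral_contrapositive_currified.
    + apply IH. intros; apply H; lia.
    + apply H; lia.
Qed.

Lemma poch_neg_zero n k : (n < k)%nat -> poch (- INR n) k = 0.
Proof.
  intro H. replace k with (S n + (k - S n))%nat by lia.
  rewrite poch_add, poch_S. replace (- INR n + INR n) with 0 by ring. ring.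
Qed.

Lemma poch_neg_n n : poch (- INR n) n = (-1)^n * INR (fact n).
Proof.
  induction n as [|n IH].
  - simpl. ring.
  - rewrite poch_Sl. replace (- INR (S n) + 1) with (- INR n) by (rewrite S_INR; ring).
    rewrite IH, fact_simpl, mult_INR, S_INR. simpl. ring.
Qed.

Definition nonint (x : R) := forall j : nat, x + INR j <> 0.

Lemma jc_zero n a b k : (n < k)%nat -> jacobi_coef n a b k = 0.
Proof. intro H. unfold jacobi_coef. rewrite poch_neg_zero by exact H. unfold Rdiv. ring. Qed.

Lemma pochN_nz n a b m : nonint (a+b) -> poch (INR n + a + b + 1) m <> 0.
Proof.
  intro H. apply poch_nz. intros i _. specialize (H (n + 1 + i)%nat).
  rewrite !plus_INR in H. simpl in H. intro E; apply H. lra.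
Qed.

Lemma m1sq n : (-1)^n * (-1)^n = 1.
Proof. rewrite <- Rpow_mult_distr. replace (-1 * -1) with 1 by ring. apply pow1. Qed.

Lemma jc_top n a b : nonint (a+b) -> jacobi_coef n a b n = 1.
Proof.
  intro H. unfold jacobi_coef. rewrite Nat.sub_diag, poch_neg_n. simpl poch.
  pose proof (pochN_nz n a b n H). pose proof (INR_fact_neq_0 n).
  pose proof (m1sq n).
  field_simplify_eq; [|split; assumption]. idtac.
  rewrite <- H2. ring.
Qed.

Lemma nonint_nz x j : nonint x -> x + INR j <> 0.
Proof. intro H; apply H. Qed.

Lemma poch_nzx x c m : nonint x -> (exists j, c = x + INR j) -> poch c m <> 0.
Proof.
  intros H [j ->]. apply poch_nz. intros i _. rewrite Rplus_assoc, <- plus_INR. apply H.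
Qed.


Lemma jc_closed n a b k : nonint (a+b) -> (k <= n)%nat ->
  jacobi_coef n a b k = (-1)^n * poch (a+1+INR k) (n-k) * poch (- INR n) k
     / (poch (INR n + a + b + 1 + INR k) (n-k) * INR (fact k)).
Proof.
  intros H Hk. unfold jacobi_coef.
  replace (poch (INR n + a + b + 1) n) with (poch (INR n+a+b+1) (k + (n-k))) by (f_equal; lia).
  rewrite poch_add.
  assert (poch (INR n + a + b + 1) k <> 0) by (apply pochN_nz; auto).
  assert (poch (INR n + a + b + 1 + INR k) (n - k) <> 0).
  { apply poch_nzx with (a+b); auto. exists (n+1+k)%nat. rewrite !plus_INR. simpl. ring. }
  pose proof (INR_fact_neq_0 k).
  field. repeat split; auto.
Qed.

Lemma nzE x y j : nonint x -> y = x + INR j -> y <> 0.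
Proof. intros H ->. apply H. Qed.

Lemma S1 n a b k : nonint (a+b) -> (k < n)%nat ->
  (INR k + 1) * (INR k + 1 + a) * jacobi_coef n a b (S k)
  = - (INR n - INR k) * (INR n + INR k + a + b + 1) * jacobi_coef n a b k.
Proof.
  intros H Hk. rewrite !jc_closed by (auto; lia).
  replace (n - k)%nat with (S (n - S k)) by lia.
  rewrite (poch_Sl (a + 1 + INR k)), (poch_Sl (INR n + a + b + 1 + INR k)), poch_S,
    fact_simpl, mult_INR, !S_INR.
  replace (a + 1 + (INR k + 1)) with (a + 1 + INR k + 1) by ring.
  replace (INR n + a + b + 1 + (INR k + 1)) with (INR n + a + b + 1 + INR k + 1) by ring.
  assert (poch (INR n + a + b + 1 + INR k + 1) (n - S k) <> 0).
  { apply poch_nzx with (a+b); auto. exists (n+1+k+1)%nat. rewrite !plus_INR. simpl. ring. }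
  assert (INR n + a + b + 1 + INR k <> 0).
  { apply nzE with (a+b) (n+1+k)%nat; auto. rewrite !plus_INR. simpl. ring. }
  pose proof (INR_fact_neq_0 k).
  assert (INR k + 1 <> 0) by (pose proof (pos_INR k); lra).
  field. repeat split; auto.
Qed.

Lemma S2 n a b k : nonint (a+b) -> (k <= n)%nat ->
  (INR n + 1 - INR k) * (2*INR n + a + b + 1) * (2*INR n + a + b + 2) * jacobi_coef (S n) a b k
  = - (INR n + 1) * (a + INR n + 1) * (INR n + a + b + 1 + INR k) * jacobi_coef n a b k.
Proof.
  intros H Hk. rewrite !jc_closed by (auto; lia).
  replace (S n - k)%nat with (S (n - k)) by lia.
  set (M := INR n + a + b + 1 + INR k).
  set (Rr := poch (M + 1) (n - k)).
  assert (E1 : poch (INR (S n) + a + b + 1 + INR k) (S (n - k)) = Rr * (M + 1 + (INR n - INR k))).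
  { rewrite poch_S, minus_INR by lia. unfold Rr, M. rewrite S_INR. f_equal; [f_equal; ring|ring]. }
  assert (EM : M + 1 + (INR n - INR k) <> 0).
  { apply nzE with (a+b) (2*n+2)%nat; auto. unfold M. rewrite !plus_INR, mult_INR. simpl. ring. }
  assert (EM0 : M + (INR n - INR k) <> 0).
  { apply nzE with (a+b) (2*n+1)%nat; auto. unfold M. rewrite !plus_INR, mult_INR. simpl. ring. }
  assert (E2 : poch M (n - k) = M * Rr / (M + (INR n - INR k))).
  { assert (poch M (S (n - k)) = poch M (S (n-k))) by reflexivity.
    rewrite poch_S in H0 at 1. rewrite poch_Sl in H0. rewrite minus_INR in H0 by lia.
    fold Rr in H0. field_simplify_eq; auto. rewrite <- H0. ring. }
  assert (E3 : poch (- INR (S n)) k = - (INR n + 1) * poch (- INR n) k / (INR k - INR n - 1)).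
  { assert (H3 : poch (- INR (S n)) (S k) = poch (- INR (S n)) (S k)) by reflexivity.
    rewrite poch_S in H3 at 1. rewrite poch_Sl in H3.
    replace (- INR (S n) + 1) with (- INR n) in H3 by (rewrite S_INR; ring).
    assert (INR k - INR n - 1 <> 0).
    { apply le_INR in Hk. lra. }
    rewrite S_INR in H3 |- *. field_simplify_eq; auto. transitivity (poch (- (INR n + 1)) k * (- (INR n + 1) + INR k)); [ring | rewrite H3; ring]. }
  rewrite E1, E2, E3. rewrite poch_S, minus_INR by lia.
  assert (Rr <> 0).
  { unfold Rr, M. apply poch_nzx with (a+b); auto. exists (n+1+k+1)%nat. rewrite !plus_INR. simpl. ring. }
  assert (M <> 0).
  { unfold M. apply nzE with (a+b) (n+1+k)%nat; auto. rewrite !plus_INR. simpl. ring. }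
  assert (INR k - INR n - 1 <> 0) by (apply le_INR in Hk; lra).
  pose proof (INR_fact_neq_0 k).
  unfold M. unfold M in *. simpl pow. 
  field. repeat split; auto.
Qed.

Definition SP (r : R) (w : nat -> R) (N : nat) (x : R) :=
  sum_f_R0 (fun k => w k * Rpower x (r - INR k)) N.

Lemma dpl_eq f x l l' : derivable_pt_lim f x l -> l = l' -> derivable_pt_lim f x l'.
Proof. intros H ->; exact H. Qed.

Lemma dterm c q x : 0 < x ->
  derivable_pt_lim (fun y => c * Rpower y q) x (c * (q * Rpower x (q - 1))).
Proof.
  intro H. apply (derivable_pt_lim_scal (fun y => Rpower y q)). apply derivable_pt_lim_power; auto.
Qed.

Lemma SP_deriv r w N x : 0 < x ->
  derivable_pt_lim (SP r w N) x (SP (r-1) (fun k => w k * (r - INR k)) N x).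
Proof.
  intro Hx. induction N as [|N IH].
  - unfold SP. cbn [sum_f_R0].
    apply dpl_eq with (w 0%nat * ((r - INR 0) * Rpower x (r - INR 0 - 1))).
    + apply (dterm (w 0%nat) (r - INR 0) x Hx).
    + replace (r - INR 0 - 1) with (r - 1 - INR 0) by ring. ring.
  - unfold SP. cbn [sum_f_R0].
    apply dpl_eq with (SP (r - 1) (fun k => w k * (r - INR k)) N x +
        w (S N) * ((r - INR (S N)) * Rpower x (r - INR (S N) - 1))).
    + apply (derivable_pt_lim_plus (SP r w N) (fun y => w (S N) * Rpower y (r - INR (S N)))).
      * exact IH.
      * apply dterm; auto.
    + unfold SP. replace (r - INR (S N) - 1) with (r - 1 - INR (S N)) by ring. ring.
Qed.

Lemma dpl_ext_pos f g x l : 0 < x -> (forall y, 0 < y -> f y = g y) ->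
  derivable_pt_lim g x l -> derivable_pt_lim f x l.
Proof.
  intros Hx Hfg Hg eps He. destruct (Hg eps He) as [d Hd].
  assert (Hd' : 0 < Rmin d (x/2)) by (apply Rmin_pos; [apply cond_pos| lra]).
  exists (mkposreal _ Hd'). intros h Hh0 Hh. simpl in Hh.
  assert (Hh1 : Rabs h < d) by (eapply Rlt_le_trans; [exact Hh| apply Rmin_l]).
  assert (Hh2 : Rabs h < x/2) by (eapply Rlt_le_trans; [exact Hh| apply Rmin_r]).
  rewrite !Hfg.
  - apply Hd; auto.
  - exact Hx.
  - apply Rabs_def2 in Hh2. lra.
Qed.

Lemma Rp1 x q : 0 < x -> Rpower x (q + 1) = Rpower x q * x.
Proof. intro H. rewrite Rpower_plus, Rpower_1; auto. Qed.

Lemma SP_mulx r w N x : 0 < x -> x * SP r w N x = SP (r+1) w N x.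
Proof.
  intro H. unfold SP. rewrite scal_sum. apply sum_eq. intros i _.
  replace (r + 1 - INR i) with ((r - INR i) + 1) by ring. rewrite Rp1; auto. ring.
Qed.

Definition shiftc (u : nat -> R) (j : nat) : R :=
  match j with O => 0 | S i => u i end.

Lemma SP_shift r u N x : SP (r-1) u N x = SP r (shiftc u) (S N) x.
Proof.
  unfold SP. rewrite (decomp_sum _ (S N)) by lia. simpl shiftc. simpl pred.
  rewrite Rmult_0_l, Rplus_0_l. apply sum_eq. intros i _.
  rewrite S_INR. f_equal. f_equal. ring.
Qed.

Lemma SP_ext r w N M x : (N <= M)%nat -> (forall k, (N < k <= M)%nat -> w k = 0) ->
  SP r w N x = SP r w M x.
Proof.
  intros H Hz. induction H as [|M H IH].
  - reflexivity.
  - unfold SP in *. cbn [sum_f_R0]. rewrite <- IH by (intros k Hk; apply Hz; lia). rewrite Hz by lia. ring.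
Qed.

Lemma SP_lin r u v c N x : SP r u N x + c * SP r v N x = SP r (fun k => u k + c * v k) N x.
Proof.
  unfold SP. rewrite scal_sum, <- plus_sum. apply sum_eq. intros; ring.
Qed.

Lemma SP_eq r u v N x : (forall k, (k <= N)%nat -> u k = v k) -> SP r u N x = SP r v N x.
Proof. intros H. unfold SP. apply sum_eq. intros i Hi. rewrite H; auto. Qed.

Definition Lc (al be r : R) (w : nat -> R) (j : nat) : R :=
  shiftc (fun i => w i * ((r - INR i) * (r - INR i + al))) j
  + w j * (- ((r - INR j) * (r - INR j + al + be + 1))).

Lemma Lval al be r w N x : 0 < x -> w (S N) = 0 ->
  x * (1 - x) * SP (r - 1 - 1) (fun k => w k * (r - INR k) * (r - 1 - INR k)) N x
  + (al + 1 - (al + be + 2) * x) * SP (r - 1) (fun k => w k * (r - INR k)) N x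
  = SP r (Lc al be r w) (S N) x.
Proof.
  intros Hx Hz.
  transitivity (SP (r-1) (fun i => w i * ((r - INR i) * (r - INR i + al))) N x
                + 1 * SP r (fun j => w j * (- ((r - INR j) * (r - INR j + al + be + 1)))) N x).
  - unfold SP. rewrite !scal_sum, <- plus_sum, <- plus_sum. apply sum_eq. intros i _.
    set (P := Rpower x (r - 1 - 1 - INR i)).
    replace (r - 1 - INR i) with ((r - 1 - 1 - INR i) + 1) by ring.
    replace (r - INR i) with (((r - 1 - 1 - INR i) + 1) + 1) by ring.
    rewrite !Rp1 by auto. fold P. ring.
  - rewrite SP_shift. rewrite (SP_ext r _ N (S N)) by (auto; intros k Hk;
      replace k with (S N) by lia; rewrite Hz; ring).
    rewrite SP_lin. apply SP_eq. intros k _. unfold Lc. ring.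
Qed.

Lemma Lrel_SP al be r w N f : (forall y, 0 < y -> f y = SP r w N y) -> w (S N) = 0 ->
  Lrel al be f (SP r (Lc al be r w) (S N)).
Proof.
  intros Hf Hz.
  exists (SP (r-1) (fun k => w k * (r - INR k)) N),
         (SP (r-1-1) (fun k => w k * (r - INR k) * (r - 1 - INR k)) N).
  intros x Hx. split; [|split].
  - apply dpl_ext_pos with (SP r w N); try lra; auto. apply SP_deriv; lra.
  - apply SP_deriv; lra.
  - rewrite <- Lval by (auto; lra). reflexivity.
Qed.

Lemma psi_SP al be nu1 nu2 n y : 0 < y ->
  psi al be nu1 nu2 n y = SP (nu2 - 1) (jacobi_coef n (- al - be - nu1 - nu2) be) n y.
Proof.
  intro Hy. unfold psi, monic_jacobi, SP. rewrite scal_sum. apply sum_eq. intros i _.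
  replace (nu2 - 1 - INR i) with ((nu2 - 1) + - INR i) by ring.
  rewrite Rpower_plus, Rpower_Ropp, Rpower_pow, pow_inv by auto. ring.
Qed.

Definition c3f a b s al := (a+b+1+2*s+al)/2.
Definition c2f a b s al := -1 - c3f a b s al.
Definition c1f a b s al := s*(s+al) + c3f a b s al*(a+b+2).
Definition c5f a b s al := -(s*(s+al+b+1)) - c3f a b s al*(1+a).
Definition muf a b m := -(m*(m+a+b+1)).
Definition Bnf a b n := /2 - (b*b-a*a)/(2*(2*n+a+b)*(2*n+a+b+2)).
Definition Gnf a b n := n*(n+a)*(n+b)*(n+a+b)/((2*n+a+b)^2 * (2*n+a+b+1)*(2*n+a+b-1)).
Definition xif s al n := (s-n)*(s-n+al).
Definition etaf a b s al n := (c1f a b s al - muf a b n) * Bnf a b n + c5f a b s al.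
Definition zetaf a b s al n :=
  (c1f a b s al + c2f a b s al * muf a b n + c3f a b s al * muf a b (n-1)) * Gnf a b n.

Lemma coefII a be s al n k : nonint (a+be) -> (k <= S n)%nat ->
  Lc al be s (jacobi_coef n a be) k =
  xif s al (INR n) * jacobi_coef (S n) a be k + etaf a be s al (INR n) * jacobi_coef n a be k
  + match n with O => 0 | S m => zetaf a be s al (INR n) * jacobi_coef m a be k end.
Proof.
  intros H Hk.
  assert (h0 : 2*INR n + a + be <> 0).
  { apply nzE with (a+be) (2*n)%nat; auto. rewrite mult_INR. simpl. ring. }
  assert (h1 : 2*INR n + a + be + 1 <> 0).
  { apply nzE with (a+be) (2*n+1)%nat; auto. rewrite plus_INR, mult_INR. simpl. ring. }
  assert (h2 : 2*INR n + a + be + 2 <> 0).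
  { apply nzE with (a+be) (2*n+2)%nat; auto. rewrite plus_INR, mult_INR. simpl. ring. }
  destruct (Nat.eq_dec k (S n)) as [->|Hk1].
  - unfold Lc, shiftc. rewrite jc_top by auto. rewrite (jc_top (S n)) by auto.
    rewrite (jc_zero n) by lia.
    destruct n as [|m]. 
    + unfold xif. ring.
    + rewrite (jc_zero m) by lia. unfold xif. ring.
  - destruct (Nat.eq_dec k n) as [->|Hk2].
    + pose proof (S2 n a be n H (le_n n)) as E2. rewrite jc_top in E2 by auto.
      assert (Ec' : jacobi_coef (S n) a be n = - ((INR n + 1) * (a + INR n + 1)) / (2 * INR n + a + be + 2)).
      { apply (Rmult_eq_reg_l ((2*INR n + a + be + 1) * (2*INR n + a + be + 2))).
        2: apply Rmult_integral_contrapositive_currified; auto.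
        match type of E2 with ?L = _ => transitivity L end. ring.
        rewrite E2. field. auto. }
      rewrite Ec'. unfold Lc, shiftc. rewrite jc_top by auto.
      destruct n as [|m].
      * unfold xif, etaf, Bnf, c1f, c5f, c3f, muf. simpl INR in *. field.
        replace (2 * 0 + a + be) with (a+be) in h0 by ring.
        replace (2 * 0 + a + be + 2) with (a+be+2) in h2 by ring. auto.
      * rewrite (jc_zero m a be (S m)) by lia. rewrite Rmult_0_r, Rplus_0_r.
        pose proof (S1 (S m) a be m H (Nat.lt_succ_diag_r m)) as E1.
        rewrite jc_top in E1 by auto.
        assert (Ecm : jacobi_coef (S m) a be m =
                 - ((INR m + 1) * (INR m + 1 + a)) / ((INR (S m) - INR m) * (INR (S m) + INR m + a + be + 1))).
        { assert (INR (S m) - INR m <> 0) by (rewrite S_INR; lra).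
          assert (INR (S m) + INR m + a + be + 1 <> 0).
          { apply nzE with (a+be) (2*m+2)%nat; auto. rewrite S_INR, plus_INR, mult_INR. simpl. ring. }
          apply (Rmult_eq_reg_l (- ((INR (S m) - INR m) * (INR (S m) + INR m + a + be + 1)))).
          2: { apply Ropp_neq_0_compat. apply Rmult_integral_contrapositive_currified; auto. }
          match type of E1 with _ = ?R => transitivity R end; [ring| rewrite <- E1; field; split; auto]. }
        rewrite Ecm. unfold xif, etaf, Bnf, c1f, c5f, c3f, muf.
        rewrite S_INR in *. field. repeat split; auto; lra.
    + destruct n as [|m]; [lia|].
      assert (Hkm : (k <= m)%nat) by lia.
      assert (hk1 : INR m + 1 - INR k <> 0) by (apply le_INR in Hkm; lra).
      assert (hk2 : INR m + 1 + 1 - INR k <> 0) by (apply le_INR in Hkm; lra).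
      assert (g1 : 2 * INR m + a + be + 1 <> 0).
      { apply nzE with (a+be) (2*m+1)%nat; auto. rewrite plus_INR, mult_INR. simpl. ring. }
      assert (g2 : 2 * INR m + a + be + 2 <> 0).
      { apply nzE with (a+be) (2*m+2)%nat; auto. rewrite plus_INR, mult_INR. simpl. ring. }
      pose proof (S2 m a be k H Hkm) as E2m.
      assert (Ec : jacobi_coef (S m) a be k =
        - ((INR m + 1) * (a + INR m + 1) * (INR m + a + be + 1 + INR k)) * jacobi_coef m a be k
        / ((INR m + 1 - INR k) * (2 * INR m + a + be + 1) * (2 * INR m + a + be + 2))).
      { apply (Rmult_eq_reg_l ((INR m + 1 - INR k) * (2 * INR m + a + be + 1) * (2 * INR m + a + be + 2))).
        2: repeat apply Rmult_integral_contrapositive_currified; auto.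
        match type of E2m with ?L = _ => transitivity L end; [ring| rewrite E2m; field; repeat split; auto]. }
      pose proof (S2 (S m) a be k H (le_S _ _ Hkm)) as E2n.
      assert (Ecp : jacobi_coef (S (S m)) a be k =
        - ((INR (S m) + 1) * (a + INR (S m) + 1) * (INR (S m) + a + be + 1 + INR k)) * jacobi_coef (S m) a be k
        / ((INR (S m) + 1 - INR k) * (2 * INR (S m) + a + be + 1) * (2 * INR (S m) + a + be + 2))).
      { assert (INR (S m) + 1 - INR k <> 0) by (rewrite S_INR; auto).
        apply (Rmult_eq_reg_l ((INR (S m) + 1 - INR k) * (2 * INR (S m) + a + be + 1) * (2 * INR (S m) + a + be + 2))).
        2: repeat apply Rmult_integral_contrapositive_currified; auto.
        match type of E2n with ?L = _ => transitivity L end; [ring| rewrite E2n; field; repeat split; auto]. }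
      unfold Lc, shiftc.
      destruct k as [|i].
      * rewrite Ecp, Ec. unfold xif, etaf, zetaf, Gnf, Bnf, c1f, c2f, c5f, c3f, muf.
        rewrite S_INR in *. simpl INR in *. field. repeat split; try assumption; try (pose proof (pos_INR m); lra); intro HH; apply g1; lra.
      * pose proof (S1 (S m) a be i H ltac:(lia)) as E1.
        assert (hi1 : INR (S m) - INR i <> 0) by (apply le_INR in Hkm; rewrite S_INR in *; lra).
        assert (hi2 : INR (S m) + INR i + a + be + 1 <> 0).
        { apply nzE with (a+be) (m+i+2)%nat; auto. rewrite S_INR, !plus_INR. simpl. ring. }
        assert (Ecm : jacobi_coef (S m) a be i =
           - ((INR i + 1) * (INR i + 1 + a)) * jacobi_coef (S m) a be (S i)
           / ((INR (S m) - INR i) * (INR (S m) + INR i + a + be + 1))).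
        { apply (Rmult_eq_reg_l (- ((INR (S m) - INR i) * (INR (S m) + INR i + a + be + 1)))).
          2: { apply Ropp_neq_0_compat. apply Rmult_integral_contrapositive_currified; auto. }
          match type of E1 with _ = ?R => transitivity R end; [ring| rewrite <- E1; field; split; auto]. }
        rewrite Ecm, Ecp, Ec. unfold xif, etaf, zetaf, Gnf, Bnf, c1f, c2f, c5f, c3f, muf.
        rewrite !S_INR in *. field. repeat split; try assumption; try (pose proof (pos_INR m); lra); intro HH; apply g1; lra.
Qed.

Lemma S1' n a b k : nonint (a+b) -> (k <= n)%nat ->
  (INR k + 1) * (INR k + 1 + a) * jacobi_coef n a b (S k)
  = - (INR n - INR k) * (INR n + INR k + a + b + 1) * jacobi_coef n a b k.
Proof.
  intros H Hk. destruct (Nat.eq_dec k n) as [->|Hne].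
  - rewrite jc_zero by lia. ring.
  - apply S1; auto; lia.
Qed.

Lemma coefI al be nu1 nu2 tau0 tau1 tau2 tau3 n k
  (Htau12 : tau1 + tau2 = 1)
  (Htau2 : tau2 = (1 + nu1 - nu2) / 2)
  (Htau3 : tau3 = nu1 * nu2 + (al + be) * (nu1 + nu2 - 1) / 2) :
  nonint ((- al - be - nu1 - nu2) + be) -> (k <= S n)%nat ->
  let c := jacobi_coef n (- al - be - nu1 - nu2) be in
  tau1 * Lc al be (nu2 - 1) c k + tau2 * Lc al be (nu2 - 1 + 1) c k + tau3 * c k + tau0 * shiftc c k
  = (INR n * (INR n - 1) + (2 - nu1 - nu2 - al) * INR n + tau0
            + nu1 * nu2 + (al - 1) * (nu1 + nu2 - 1) / 2) * shiftc c k.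
Proof.
  intros H Hk c.
  assert (Ht1 : tau1 = 1 - tau2) by lra. subst tau1 tau3 tau2.
  unfold Lc, shiftc. destruct k as [|i].
  - simpl INR. field.
  - pose proof (S1' n (- al - be - nu1 - nu2) be i H ltac:(lia)) as E. fold c in E.
    match goal with |- ?L = ?R => assert (EE : L - R =
       ((INR i + 1) * (INR i + 1 + (- al - be - nu1 - nu2)) * c (S i)
        - (- (INR n - INR i) * (INR n + INR i + (- al - be - nu1 - nu2) + be + 1) * c i)) * (-1)) end.
    + rewrite S_INR. field.
    + rewrite E in EE. apply Rminus_diag_uniq. rewrite EE. ring.
Qed.

Lemma SP_comb3 r N x v u1 u2 u3 t1 t2 t3 :
  (forall k, (k <= N)%nat -> v k = t1 * u1 k + t2 * u2 k + t3 * u3 k) ->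
  SP r v N x = t1 * SP r u1 N x + t2 * SP r u2 N x + t3 * SP r u3 N x.
Proof.
  intro H. unfold SP. rewrite !scal_sum, <- !plus_sum. apply sum_eq. intros i Hi.
  rewrite H by auto. ring.
Qed.

Lemma SP_comb4 r N x u1 u2 u3 u4 t1 t2 t3 t4 l :
  (forall k, (k <= N)%nat -> t1 * u1 k + t2 * u2 k + t3 * u3 k + t4 * u4 k = l * u4 k) ->
  t1 * SP r u1 N x + t2 * SP r u2 N x + t3 * SP r u3 N x + t4 * SP r u4 N x = l * SP r u4 N x.
Proof.
  intro H. unfold SP. rewrite !scal_sum, <- !plus_sum. apply sum_eq. intros i Hi.
  transitivity ((t1 * u1 i + t2 * u2 i + t3 * u3 i + t4 * u4 i) * Rpower x (r - INR i)); [ring|].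
  rewrite H by auto. ring.
Qed.

Theorem mainTheorem5
  (al be nu1 nu2 tau0 tau1 tau2 tau3 : R)
  (Htau12 : tau1 + tau2 = 1)
  (Htau2 : tau2 = (1 + nu1 - nu2) / 2)
  (Htau3 : tau3 = nu1 * nu2 + (al + be) * (nu1 + nu2 - 1) / 2)
  (Hnint : forall z : Z, al + nu1 + nu2 <> IZR z) :
  (* (i) M psi_n = lambda_n psi_n, M = tau1 X L + tau2 L X + tau3 X + tau0 *)
  (forall n : nat,
     exists gL gLX : R -> R,
       Lrel al be (psi al be nu1 nu2 n) gL /\
       Lrel al be (fun x => x * psi al be nu1 nu2 n x) gLX /\
       forall x, 0 < x < 1 ->
         tau1 * (x * gL x) + tau2 * gLX x + tau3 * (x * psi al be nu1 nu2 n x)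
           + tau0 * psi al be nu1 nu2 n x
         = (INR n * (INR n - 1) + (2 - nu1 - nu2 - al) * INR n + tau0
            + nu1 * nu2 + (al - 1) * (nu1 + nu2 - 1) / 2)
           * psi al be nu1 nu2 n x) /\
  (* (ii) L acts tridiagonally, with psi_{-1} := 0 *)
  (forall n : nat,
     exists xi eta zeta : R, exists gL : R -> R,
       Lrel al be (psi al be nu1 nu2 n) gL /\
       forall x, 0 < x < 1 ->
         gL x = xi * psi al be nu1 nu2 (S n) x + eta * psi al be nu1 nu2 n x
                + (match n with
                   | O => 0
                   | S m => zeta * psi al be nu1 nu2 m x
                   end)).
Proof.
  assert (H : nonint ((- al - be - nu1 - nu2) + be)).
  { intro j. specialize (Hnint (Z.of_nat j)). rewrite <- INR_IZR_INZ in Hnint. lra. }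
  set (a := - al - be - nu1 - nu2) in *.
  set (s := nu2 - 1).
  split.
  - intro n. set (c := jacobi_coef n a be).
    exists (SP s (Lc al be s c) (S n)), (SP (s+1) (Lc al be (s+1) c) (S n)).
    split; [|split].
    + apply Lrel_SP. intros; apply psi_SP; auto. apply jc_zero; lia.
    + apply Lrel_SP. intros y Hy. rewrite psi_SP by auto. apply SP_mulx; auto. apply jc_zero; lia.
    + intros x Hx. rewrite !psi_SP by lra. fold s. fold c.
      rewrite !SP_mulx by lra.
      assert (Es : SP s c n x = SP (s+1) (shiftc c) (S n) x).
      { rewrite <- SP_shift. replace (s+1-1) with s by ring. reflexivity. }
      fold a. fold c. rewrite Es. rewrite (SP_ext (s+1) c n (S n)) by (auto; intros k Hk; apply jc_zero; lia).
      apply SP_comb4. intros k Hk. unfold c, s, a.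
      apply coefI; auto.
  - intro n. exists (xif s al (INR n)), (etaf a be s al (INR n)), (zetaf a be s al (INR n)),
      (SP s (Lc al be s (jacobi_coef n a be)) (S n)).
    split.
    + apply Lrel_SP. intros; apply psi_SP; auto. apply jc_zero; lia.
    + intros x Hx. rewrite !psi_SP by lra. fold s. fold a.
      rewrite (SP_ext s (jacobi_coef n a be) n (S n)) by (auto; intros k Hk; apply jc_zero; lia).
      destruct n as [|m].
      * transitivity (xif s al (INR 0) * SP s (jacobi_coef 1 a be) 1 x +
           etaf a be s al (INR 0) * SP s (jacobi_coef 0 a be) 1 x + 0 * SP s (jacobi_coef 0 a be) 1 x).
        -- apply SP_comb3. intros k Hk. rewrite coefII by auto. ring.
        -- ring.
      * rewrite psi_SP by lra. fold s. fold a.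
        rewrite (SP_ext s (jacobi_coef m a be) m (S (S m))) by (auto; intros k Hk; apply jc_zero; lia).
        apply SP_comb3. intros k Hk. rewrite coefII by auto. reflexivity.
Qed.
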